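(* Let $\Omega=\{(u,v)\in\mathbb R^2: 0<u<2^{1/3},\ v>0\}$ and let $I\ni t\mapsto(u(t),v(t))\in\Omega$ be the maximal solution of $$u'=\frac23\,\frac{2-u^3}{u^3v^3},\qquad v'=-\frac23\,\frac{1-2u^3}{u^4v^2},\qquad u(0)=v(0)=1.$$ Then this solution parametrizes the whole curve $v=1/\sqrt{u(2-u^3)}$, $0<u<2^{1/3}$; its existence interval is $I=(t_{min},+\infty)$ with $$t_{min}=-\frac32\int_0^1\frac{x^{3/2}}{(2-x^3)^{5/2}}\,dx,$$ and $\lim_{t\to t_{min}}u(t)=0$, $\lim_{t\to t_{min}}v(t)=+\infty$, $\lim_{t\to+\infty}u(t)=2^{1/3}$, $\lim_{t\to+\infty}v(t)=+\infty$. *)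

(* Defs.v *)
From Stdlib Require Import Reals Lra.
From Coquelicot Require Import Coquelicot.
Open Scope R_scope.

Definition in_I (a b : Rbar) (t : R) : Prop := Rbar_lt a t /\ Rbar_lt t b.

Definition cbrt2 : R := Rpower 2 (1/3).

Definition F1 (u v : R) : R := 2/3 * ((2 - u^3) / (u^3 * v^3)).
Definition F2 (u v : R) : R := - (2/3) * ((1 - 2 * u^3) / (u^4 * v^2)).

Definition is_sol (a b : Rbar) (u v : R -> R) : Prop :=
  Rbar_lt a (Finite 0) /\ Rbar_lt (Finite 0) b /\ u 0 = 1 /\ v 0 = 1 /\
  forall t, in_I a b t ->
    (0 < u t < cbrt2 /\ 0 < v t) /\
    is_derive u t (F1 (u t) (v t)) /\ is_derive v t (F2 (u t) (v t)).

Definition is_max_sol (a b : Rbar) (u v : R -> R) : Prop :=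
  is_sol a b u v /\
  forall a' b' u' v', is_sol a' b' u' v' ->
    Rbar_le a' a -> Rbar_le b b' ->
    (forall t, in_I a b t -> u' t = u t /\ v' t = v t) ->
    a' = a /\ b' = b.

(* t_min = -3/2 * int_0^1 x^(3/2) / (2 - x^3)^(5/2) dx,
   with x^(3/2) = x sqrt x and (2-x^3)^(5/2) = (2-x^3)^2 sqrt(2-x^3) *)
Definition tmin : R :=
  - (3/2) * RInt (fun x => x * sqrt x / ((2 - x^3)^2 * sqrt (2 - x^3))) 0 1.

(* Main.v *)
Require Import Defs.
From Stdlib Require Import Reals Lra Psatz Ranalysis5 ClassicalEpsilon.
From Coquelicot Require Import Coquelicot.
Open Scope R_scope.

Lemma c_pos : 0 < cbrt2.
Proof. unfold cbrt2, Rpower. apply exp_pos. Qed.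

Lemma c_cube : cbrt2 ^ 3 = 2.
Proof.
  rewrite <- Rpower_pow by apply c_pos. unfold cbrt2.
  rewrite Rpower_mult. replace (1/3 * INR 3) with 1 by (simpl; field).
  apply Rpower_1; lra.
Qed.

Lemma cube_lt : forall x y, x < y -> x ^ 3 < y ^ 3.
Proof.
  intros x y H. assert (0 < x^2 + x*y + y^2).
  { destruct (Rle_dec 0 (x*y)); nra. }
  replace (y^3 - x^3) with ((y-x)*(x^2+x*y+y^2)) by ring. nra.
Qed.

Lemma cube_le : forall x y, x <= y -> x ^ 3 <= y ^ 3.
Proof. intros x y [H|H]. left; now apply cube_lt. subst; lra. Qed.

Lemma lt_c : forall x, x < cbrt2 <-> x ^ 3 < 2.
Proof.
  intro x; split; intro H.
  - rewrite <- c_cube; now apply cube_lt.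
  - destruct (Rlt_le_dec x cbrt2) as [h|h]; auto.
    apply cube_le in h. rewrite c_cube in h. lra.
Qed.

Definition k (x : R) : R := x * sqrt x / ((2 - x^3)^2 * sqrt (2 - x^3)).

Lemma k_cont : forall x, x < cbrt2 -> continuous k x.
Proof.
  intros x Hx. apply lt_c in Hx.
  apply continuity_pt_filterlim.
  unfold k.
  assert (Hs : forall y, continuity_pt sqrt y).
  { intro y. apply continuity_pt_filterlim. apply continuous_sqrt. }
  change (continuity_pt (div_fct (fun x => x * sqrt x) (fun x => (2 - x^3)^2 * sqrt (2 - x^3))) x).
  apply continuity_pt_div.
  - apply (continuity_pt_mult (fun x => x) sqrt). apply continuity_pt_id. apply Hs.
  - apply (continuity_pt_mult (fun x => (2 - x^3)^2) (fun x => sqrt (2 - x^3))).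
    + reg.
    + apply (continuity_pt_comp (fun x => 2 - x^3) sqrt). reg. apply Hs.
  - assert (0 < sqrt (2 - x^3)) by (apply sqrt_lt_R0; lra).
    assert (0 < (2 - x^3)^2) by (apply pow_lt; lra). nra.
Qed.

Lemma my_mult f g x df dg : is_derive f x df -> is_derive g x dg -> is_derive (fun y => f y * g y) x (df * g x + f x * dg).
Proof. intros. apply (is_derive_mult f g x df dg); auto. intros; apply Rmult_comm. Qed.
Lemma my_comp (f g : R -> R) x df dg : is_derive f (g x) df -> is_derive g x dg -> is_derive (fun y => f (g y)) x (dg * df).
Proof. intros. apply (is_derive_comp f g x df dg); auto. Qed.
Lemma my_minus f g x df dg : is_derive f x df -> is_derive g x dg -> is_derive (fun y => f y - g y) x (df - dg).
Proof. intros. apply (is_derive_minus f g x df dg); auto. Qed.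

Lemma ex_RInt_k : forall a b, a < cbrt2 -> b < cbrt2 -> ex_RInt k a b.
Proof.
  intros a b Ha Hb. apply (@ex_RInt_continuous R_CompleteNormedModule). intros z Hz. apply k_cont.
  destruct Hz as [_ Hz]. unfold Rmax in Hz. destruct (Rle_dec a b); lra.
Qed.

Definition H (w : R) : R := 3/2 * RInt k 1 w.

Lemma H_deriv : forall w, w < cbrt2 -> is_derive H w (3/2 * k w).
Proof.
  intros w Hw. unfold H. apply is_derive_scal.
  apply (is_derive_RInt k (fun w => RInt k 1 w) 1 w).
  - apply (filter_imp (fun b => b < cbrt2)).
    + intros b Hb. apply (@RInt_correct R_CompleteNormedModule). apply ex_RInt_k; auto. pose proof c_pos.
      assert (1 < cbrt2). { apply lt_c in Hb. destruct (Rlt_le_dec 1 cbrt2); auto.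
        apply cube_le in r. rewrite c_cube in r. lra. }
      lra.
    + apply open_lt. auto.
  - apply k_cont; auto.
Qed.

Lemma c_gt1 : 1 < cbrt2.
Proof. destruct (Rlt_le_dec 1 cbrt2) as [h|h]; auto.
  apply cube_le in h. rewrite c_cube in h. lra. Qed.

Lemma c_lt2 : cbrt2 < 2.
Proof. destruct (Rlt_le_dec cbrt2 2) as [h|h]; auto.
  apply cube_le in h. rewrite c_cube in h. lra. Qed.

Lemma H_cont : forall w, w < cbrt2 -> continuity_pt H w.
Proof.
  intros w Hw. apply continuity_pt_filterlim. apply (@ex_derive_continuous R_AbsRing R_NormedModule).
  eexists. apply H_deriv; auto.
Qed.

Lemma k_pos : forall x, 0 < x < cbrt2 -> 0 < k x.
Proof.
  intros x Hx. assert (h3 := proj1 (lt_c x) (proj2 Hx)). unfold k.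
  assert (0 < sqrt x) by (apply sqrt_lt_R0; lra).
  assert (0 < sqrt (2 - x^3)) by (apply sqrt_lt_R0; lra).
  assert (0 < (2 - x^3)^2) by (apply pow_lt; lra).
  apply Rdiv_lt_0_compat; nra.
Qed.

Lemma k_nonneg : forall x, 0 <= x < cbrt2 -> 0 <= k x.
Proof.
  intros x [[h|h] h']. left; apply k_pos; lra. subst. unfold k. rewrite sqrt_0. lra.
Qed.

Lemma MVT_use : forall f df x y, x < y ->
  (forall z, x <= z <= y -> is_derive f z (df z)) ->
  exists z, x <= z <= y /\ f y - f x = df z * (y - x).
Proof.
  intros f df x y Hxy Hd.
  destruct (MVT_gen f x y df) as [z [Hz E]].
  - intros z Hz. apply Hd. rewrite Rmin_left, Rmax_right in Hz; lra.
  - intros z Hz. rewrite Rmin_left, Rmax_right in Hz by lra.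
    apply continuity_pt_filterlim. apply (@ex_derive_continuous R_AbsRing R_NormedModule). eexists. apply Hd; lra.
  - exists z. rewrite Rmin_left, Rmax_right in Hz by lra. auto.
Qed.

Lemma H_le : forall x y, 0 <= x <= y -> y < cbrt2 -> H x <= H y.
Proof.
  intros x y [hx [h|h]] hy; [|subst; lra].
  destruct (MVT_use H (fun z => 3/2 * k z) x y) as [z [Hz E]]; auto.
  intros; apply H_deriv; lra.
  assert (0 <= k z) by (apply k_nonneg; lra). nra.
Qed.

Lemma H_lt : forall x y, 0 <= x < y -> y < cbrt2 -> H x < H y.
Proof.
  intros x y [hx h] hy.
  set (m := (x + y) / 2).
  assert (H x <= H m) by (apply H_le; unfold m; lra).
  destruct (MVT_use H (fun z => 3/2 * k z) m y) as [z [Hz E]]; [unfold m; lra| |].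
  intros; apply H_deriv; lra.
  assert (0 < k z) by (apply k_pos; unfold m in *; lra).
  unfold m in *. nra.
Qed.

Lemma H1 : H 1 = 0.
Proof. unfold H. rewrite RInt_point. unfold zero; simpl. ring. Qed.

Lemma H0 : H 0 = tmin.
Proof.
  assert (E : tmin = - (3/2) * RInt k 0 1) by reflexivity.
  rewrite E. unfold H. rewrite <- opp_RInt_swap.
  - change (opp (RInt k 0 1)) with (- (RInt k 0 1)). ring.
  - apply ex_RInt_k; pose proof c_gt1; lra.
Qed.

Lemma tmin_neg : tmin < 0.
Proof. assert (h := H_lt 0 1 ltac:(lra) c_gt1). rewrite H0, H1 in h. exact h. Qed.

Lemma is_derive_eq (f : R -> R) (x l l2 : R) : is_derive f x l -> l = l2 -> is_derive f x l2.
Proof. intros; subst; auto. Qed.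

Definition E (x : R) := 1 / ((2 - x^3) * sqrt (2 - x^3)).
Lemma E_deriv : forall x, x < cbrt2 -> is_derive E x (9/2 * x^2 / ((2 - x^3)^2 * sqrt (2 - x^3))).
Proof.
  intros x Hx. apply lt_c in Hx. 
  assert (Hr0 : 0 < sqrt (2 - x^3)) by (apply sqrt_lt_R0; lra).
  assert (Hr : sqrt (2 - x^3) * sqrt (2 - x^3) = 2 - x^3) by (apply sqrt_sqrt; lra).
  unfold E. auto_derive; replace (2 + - (x * (x * (x * 1)))) with (2 - x^3) by ring.
  - split. lra. split; auto. apply Rgt_not_eq. nra.
  - set (r := sqrt (2 - x^3)) in *. clearbody r. rewrite <- Hr. field. lra.
Qed.

Lemma D_mono : forall w, 1 <= w < cbrt2 -> H w - E w / 6 >= - 1/6.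
Proof.
  intros w [h1 h2]. destruct h1 as [h1|h1].
  2:{ subst. rewrite H1. unfold E. replace (2 - 1^3) with 1 by ring. rewrite sqrt_1. lra. }
  destruct (MVT_use (fun x => H x - E x / 6)
     (fun x => 3/2 * k x - 9/2 * x^2 / ((2 - x^3)^2 * sqrt (2 - x^3)) / 6) 1 w) as [z [Hz Eq]]; auto.
  - intros z Hz. apply my_minus. apply H_deriv; lra.
    apply (is_derive_ext (fun x => / 6 * E x)). { intro t; exact (Rmult_comm _ _). }
    eapply is_derive_eq. apply is_derive_scal. apply E_deriv; lra. simpl. unfold Rdiv. ring.
  - assert (hz3 : z^3 < 2) by (apply lt_c; lra).
    assert (Hr0 : 0 < sqrt (2 - z^3)) by (apply sqrt_lt_R0; lra).
    assert (Hq : 0 < (2 - z^3)^2) by (apply pow_lt; lra).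
    assert (hs : 1 <= sqrt z). { rewrite <- sqrt_1. apply sqrt_le_1_alt. lra. }
    assert (Hz23 : z^2 <= z^3) by nra.
    assert (Hpos : 0 <= 3/2 * k z - 9/2 * z^2 / ((2 - z^3)^2 * sqrt (2 - z^3)) / 6).
    { assert (Eq2 : 3/2 * k z - 9/2 * z^2 / ((2 - z^3)^2 * sqrt (2 - z^3)) / 6 =
        (3/2 * z * sqrt z - 3/4 * z^2) * / ((2 - z ^ 3) ^ 2 * sqrt (2 - z ^ 3))).
      { unfold k. field. nra. }
      rewrite Eq2. apply Rmult_le_pos. nra. left. apply Rinv_0_lt_compat. nra. }
    assert (HE1 : H 1 - E 1 / 6 = -1/6).
    { rewrite H1. unfold E. replace (2 - 1^3) with 1 by ring. rewrite sqrt_1. lra. }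
    nra.
Qed.

Lemma cbrt_cube : forall y, 0 < y -> (Rpower y (1/3)) ^ 3 = y.
Proof.
  intros y Hy. rewrite <- Rpower_pow by (unfold Rpower; apply exp_pos).
  rewrite Rpower_mult. replace (1/3 * INR 3) with 1 by (simpl; field).
  apply Rpower_1; lra.
Qed.

Lemma H_unbounded : forall M, exists w, 1 < w < cbrt2 /\ M < H w.
Proof.
  intro M. set (d := 1 / (6 * Rabs M + 4)).
  assert (HM := Rabs_pos M).
  assert (Hd : 0 < d <= 1/4). { unfold d. split. apply Rdiv_lt_0_compat; lra.
    apply Rmult_le_reg_r with (6 * Rabs M + 4). lra. field_simplify; lra. }
  set (w := Rpower (2 - d) (1/3)).
  assert (Hw3 : w ^ 3 = 2 - d) by (apply cbrt_cube; lra).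
  assert (Hw0 : 0 < w) by (unfold w, Rpower; apply exp_pos).
  assert (Hw1 : 1 < w). { destruct (Rlt_le_dec 1 w) as [h|h]; auto. apply cube_le in h. lra. }
  assert (Hwc : w < cbrt2) by (apply lt_c; lra).
  exists w. split. lra.
  assert (HD := D_mono w ltac:(lra)).
  unfold E in HD. rewrite Hw3 in HD. replace (2 - (2 - d)) with d in HD by ring.
  assert (Hs : 0 < sqrt d <= 1). { split. apply sqrt_lt_R0; lra. rewrite <- sqrt_1. apply sqrt_le_1_alt; lra. }
  assert (1 / d <= 1 / (d * sqrt d)).
  { apply Rmult_le_reg_r with (d * sqrt d). nra. field_simplify; try lra. }
  assert (1 / d = 6 * Rabs M + 4) by (unfold d; field; lra).
  assert (M <= Rabs M) by apply RRle_abs.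
  lra.
Qed.

Definition U (t : R) : R := epsilon (inhabits 0) (fun w => 0 < w < cbrt2 /\ H w = t).

Lemma H_inj : forall x y, 0 <= x < cbrt2 -> 0 <= y < cbrt2 -> H x = H y -> x = y.
Proof.
  intros x y Hx Hy E. destruct (Rtotal_order x y) as [h|[h|h]]; auto.
  - assert (H x < H y) by (apply H_lt; lra). lra.
  - assert (H y < H x) by (apply H_lt; lra). lra.
Qed.

Lemma U_spec : forall t, tmin < t -> (0 < U t < cbrt2) /\ H (U t) = t.
Proof.
  intros t Ht. unfold U. apply epsilon_spec.
  destruct (H_unbounded t) as [w1 [Hw1 Hw1t]].
  destruct (IVT_interv (fun x => H x - t) 0 w1) as [z [Hz Ez]].
  - intros a Ha. apply (continuity_pt_minus H (fun _ => t)). apply H_cont; lra. apply continuity_pt_const. intros ? ?; auto.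
  - lra.
  - rewrite H0. lra.
  - lra.
  - exists z. assert (z <> 0). { intro; subst. rewrite H0 in Ez. lra. }
    split. lra. lra.
Qed.

Lemma U_uniq : forall t w, 0 < w < cbrt2 -> H w = t -> U t = w.
Proof.
  intros t w Hw E.
  assert (Ht : tmin < t). { rewrite <- H0, <- E. apply H_lt; lra. }
  destruct (U_spec t Ht) as [A1 A2]. apply H_inj; try lra.
Qed.

Lemma U_mono : forall s s', tmin < s -> s <= s' -> U s <= U s'.
Proof.
  intros s s' Hs Hss. destruct (U_spec s Hs) as [A1 A2]. destruct (U_spec s' ltac:(lra)) as [B1 B2].
  destruct (Rle_dec (U s) (U s')) as [h|h]; auto. exfalso.
  assert (H (U s') < H (U s)) by (apply H_lt; lra). lra.
Qed.

Lemma U_cont : forall t, tmin < t -> continuity_pt U t.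
Proof.
  intros t Ht. destruct (U_spec t Ht) as [A1 A2].
  set (lb := U t / 2). set (ub := (U t + cbrt2) / 2).
  apply (continuity_pt_recip_prelim H U lb ub).
  - unfold lb, ub; lra.
  - intros x y Hx Hxy Hy. apply H_lt; unfold lb, ub in *; lra.
  - intros x Hx. unfold comp, id. apply U_uniq; auto. unfold lb, ub in *; lra.
  - intros a Ha. apply H_cont. unfold ub in *; lra.
  - rewrite <- A2. split; apply H_lt; unfold lb, ub; lra.
Qed.

Lemma H_dpt : forall a, a < cbrt2 -> derivable_pt H a.
Proof.
  intros a Ha. exists (3/2 * k a). apply is_derive_Reals. apply H_deriv; auto.
Qed.

Lemma U_deriv : forall t, tmin < t -> is_derive U t (1 / (3/2 * k (U t))).
Proof.
  intros t Ht.
  set (lb := (tmin + t) / 2). set (ub := t + 1).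
  destruct (U_spec t Ht) as [A1 A2].
  destruct (U_spec ub ltac:(unfold ub; lra)) as [B1 B2].
  destruct (U_spec lb ltac:(unfold lb; lra)) as [C1 C2].
  assert (Prf : forall a, U lb <= a <= U ub -> derivable_pt H a).
  { intros a Ha. apply H_dpt. lra. }
  assert (Hincr : U lb <= U t <= U ub).
  { split; apply U_mono; unfold lb, ub; lra. }
  assert (Hcomp : forall x, lb <= x <= ub -> comp H U x = id x).
  { intros x Hx. unfold comp, id. apply U_spec. unfold lb in *; lra. }
  pose proof (derivable_pt_lim_recip_interv H U lb ub t Prf (U_cont t Ht)
     ltac:(unfold lb, ub; lra) ltac:(unfold lb, ub; lra) Hincr Hcomp) as D.
  rewrite (derive_pt_eq_0 H (U t) (3/2 * k (U t)) (Prf (U t) Hincr)) in D.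
  - apply is_derive_Reals. apply D. assert (0 < k (U t)) by (apply k_pos; lra). lra.
  - apply is_derive_Reals. apply H_deriv; lra.
Qed.

Definition g (w : R) : R := 1 / sqrt (w * (2 - w^3)).
Definition Dg (w : R) : R := - (2 - 4 * w^3) / (2 * sqrt (w * (2 - w^3)) * (w * (2 - w^3))).

Lemma q_pos : forall w, 0 < w < cbrt2 -> 0 < w * (2 - w^3).
Proof. intros w Hw. assert (w^3 < 2) by (apply lt_c; lra). nra. Qed.

Lemma g_deriv : forall w, 0 < w < cbrt2 -> is_derive g w (Dg w).
Proof.
  intros w Hw. assert (Hq := q_pos w Hw).
  assert (Hr0 : 0 < sqrt (w * (2 - w^3))) by (apply sqrt_lt_R0; lra).
  assert (Hr : sqrt (w * (2 - w^3)) * sqrt (w * (2 - w^3)) = w * (2 - w^3)) by (apply sqrt_sqrt; lra).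
  unfold g, Dg. auto_derive; replace (2 + - (w * (w * (w * 1)))) with (2 - w^3) by ring.
  - split. lra. split; auto. lra.
  - set (r := sqrt (w * (2 - w^3))) in *. clearbody r. rewrite <- Hr. field. lra.
Qed.

Lemma alg_gen : forall w, 0 < w < cbrt2 ->
  F1 w (g w) = 1 / (3/2 * k w) /\ F2 w (g w) = 1 / (3/2 * k w) * Dg w.
Proof.
  intros w Hw. assert (h3 : w^3 < 2) by (apply lt_c; lra).
  unfold g, Dg, k. rewrite sqrt_mult by lra.
  assert (Hs0 : 0 < sqrt w) by (apply sqrt_lt_R0; lra).
  assert (Hr0 : 0 < sqrt (2 - w^3)) by (apply sqrt_lt_R0; lra).
  assert (Hs : w = sqrt w * sqrt w) by (rewrite sqrt_sqrt; lra).
  assert (Hr : sqrt (2 - w^3) * sqrt (2 - w^3) = 2 - w^3) by (apply sqrt_sqrt; lra).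
  set (s := sqrt w) in *. set (r := sqrt (2 - w^3)) in *. clearbody s r.
  unfold F1, F2. subst w. rewrite <- Hr. split. field. lra. field. lra.
Qed.

Definition Vs (t : R) : R := g (U t).

Lemma sol_exists : is_sol (Finite tmin) p_infty U Vs.
Proof.
  assert (U1 : U 0 = 1) by (apply U_uniq; [pose proof c_gt1; lra | apply H1]).
  split. simpl. apply tmin_neg. split. simpl. auto. split. auto. split.
  - unfold Vs. rewrite U1. unfold g. replace (1 * (2 - 1^3)) with 1 by ring. rewrite sqrt_1. lra.
  - intros t [Ht _]. simpl in Ht. destruct (U_spec t Ht) as [A1 A2].
    destruct (alg_gen (U t) A1) as [E1 E2].
    split. split. auto. unfold Vs, g. apply Rdiv_lt_0_compat. lra. apply sqrt_lt_R0. apply q_pos; auto.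
    split.
    + unfold Vs. rewrite E1. apply U_deriv; auto.
    + unfold Vs. rewrite E2. apply (my_comp g U t). apply g_deriv; auto. apply U_deriv; auto.
Qed.

Lemma in_I_between : forall a b x y z, in_I a b x -> in_I a b y ->
  Rmin x y <= z <= Rmax x y -> in_I a b z.
Proof.
  intros a b x y z [Hx1 Hx2] [Hy1 Hy2] Hz.
  unfold Rmin, Rmax in Hz. destruct (Rle_dec x y);
  destruct a; destruct b; simpl in *; split; simpl; try tauto; lra.
Qed.

Lemma const_on : forall a b (f : R -> R), in_I a b 0 ->
  (forall t, in_I a b t -> is_derive f t 0) -> forall t, in_I a b t -> f t = f 0.
Proof.
  intros a b f H0I Hd t Ht.
  destruct (Rtotal_order t 0) as [h|[h|h]].
  - destruct (MVT_use f (fun _ => 0) t 0) as [z [Hz Ez]]; auto.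
    + intros z Hz. apply Hd. apply (in_I_between a b t 0); auto.
      rewrite Rmin_left, Rmax_right; lra.
    + lra.
  - subst; auto.
  - destruct (MVT_use f (fun _ => 0) 0 t) as [z [Hz Ez]]; auto.
    + intros z Hz. apply Hd. apply (in_I_between a b 0 t); auto.
      rewrite Rmin_left, Rmax_right; lra.
    + lra.
Qed.

Lemma sol_props : forall a b u v, is_sol a b u v ->
  (forall t, in_I a b t -> v t = g (u t) /\ H (u t) = t) /\ Rbar_le tmin a.
Proof.
  intros a b u v [Ha [Hb [Hu0 [Hv0 Hs]]]].
  assert (H0I : in_I a b 0) by (split; auto).
  assert (Gc : forall t, in_I a b t -> v t ^ 2 * (u t * (2 - u t ^ 3)) = 1).
  { intros t Ht.
    rewrite (const_on a b (fun t => v t ^ 2 * (u t * (2 - u t ^ 3))) H0I); auto.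
    - rewrite Hu0, Hv0. ring.
    - intros s Hs'. destruct (Hs s Hs') as [[[Hu1 Hu2] Hvp] [Du Dv]].
      eapply is_derive_eq.
      + apply my_mult.
        * apply (my_comp (fun y => y ^ 2) v s (2 * v s)). auto_derive. exact I. ring. apply Dv.
        * apply (my_comp (fun y => y * (2 - y ^ 3)) u s (2 - 4 * u s ^ 3)). auto_derive. exact I. ring. apply Du.
      + simpl. unfold F1, F2. field. lra. }
  assert (Cv : forall t, in_I a b t -> v t = g (u t)).
  { intros t Ht. destruct (Hs t Ht) as [[Hu Hvp] _].
    assert (Hq := q_pos (u t) Hu). specialize (Gc t Ht).
    assert (Eq : u t * (2 - u t ^ 3) = (1 / v t) ^ 2) 
      by (transitivity (v t ^ 2 * (u t * (2 - u t ^ 3)) / v t ^ 2); [field; lra | rewrite Gc; field; lra]).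
    unfold g. rewrite Eq. rewrite sqrt_pow2. field. lra.
    left. apply Rdiv_lt_0_compat; lra. }
  assert (Ht : forall t, in_I a b t -> H (u t) = t).
  { intros t Ht.
    assert (Hc : H (u t) - t = H (u 0) - 0).
    { apply (const_on a b (fun t => H (u t) - t) H0I); auto.
      intros s Hs'. destruct (Hs s Hs') as [[Hu Hvp] [Du Dv]].
      eapply is_derive_eq.
      - apply my_minus. apply (my_comp H u). apply H_deriv. lra. apply Du.
        apply (is_derive_id (K := R_AbsRing)).
      - simpl. rewrite (Cv s Hs'). destruct (alg_gen (u s) Hu) as [E1 _]. rewrite E1.
        assert (0 < k (u s)) by (apply k_pos; auto). change one with 1. field. lra. }
    rewrite Hu0, H1 in Hc. lra. }
  split.
  - intros t Hti. split; auto.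
  - destruct (Rbar_le_lt_dec tmin a) as [h|h]; auto. exfalso.
    assert (HI : in_I a b tmin).
    { split; auto. destruct b; simpl in *; auto. pose proof tmin_neg; lra. }
    destruct (Hs tmin HI) as [[Hu _] _].
    assert (H 0 < H (u tmin)) by (apply H_lt; lra).
    rewrite H0, (Ht tmin HI) in *. lra.
Qed.

Lemma ev_tmin : forall eta, 0 < eta < cbrt2 ->
  at_right tmin (fun y => tmin < y /\ 0 < U y < eta).
Proof.
  intros eta Heta.
  assert (Hd : 0 < H eta - tmin) by (rewrite <- H0; assert (H 0 < H eta) by (apply H_lt; lra); lra).
  exists (mkposreal _ Hd). intros y Hy Hty. simpl in Hy.
  unfold ball in Hy; simpl in Hy; unfold AbsRing_ball, abs, minus, plus, opp in Hy; simpl in Hy.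
  apply Rabs_def2 in Hy.
  destruct (U_spec y Hty) as [A1 A2]. split; auto. split. lra.
  destruct (Rlt_le_dec (U y) eta) as [h|h]; auto.
  assert (H eta <= H (U y)) by (apply H_le; lra). lra.
Qed.

Lemma ev_inf : forall w0, 0 < w0 < cbrt2 ->
  Rbar_locally p_infty (fun y => tmin < y /\ w0 < U y < cbrt2).
Proof.
  intros w0 Hw0. exists (H w0). intros y Hy.
  assert (Ht : tmin < y) by (rewrite <- H0 in *; assert (H 0 < H w0) by (apply H_lt; lra); lra).
  destruct (U_spec y Ht) as [A1 A2]. split; auto. split; try lra.
  destruct (Rlt_le_dec w0 (U y)) as [h|h]; auto.
  assert (H (U y) <= H w0) by (apply H_le; lra). lra.
Qed.

Lemma g_big : forall M w, 0 < w < cbrt2 -> w * (2 - w^3) < 1 / (Rabs M + 1)^2 -> M < g w.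
Proof.
  intros M w Hw Hq. assert (Hq0 := q_pos w Hw). assert (HM := Rabs_pos M).
  assert (HM' := RRle_abs M).
  assert (Hs : sqrt (w * (2 - w^3)) < 1 / (Rabs M + 1)).
  { rewrite <- (sqrt_pow2 (1 / (Rabs M + 1))). apply sqrt_lt_1_alt. split. lra.
    replace ((1 / (Rabs M + 1))^2) with (1 / (Rabs M + 1)^2) by (field; lra). auto.
    left. apply Rdiv_lt_0_compat; lra. }
  assert (Hs0 : 0 < sqrt (w * (2 - w^3))) by (apply sqrt_lt_R0; lra).
  unfold g. set (s := sqrt (w * (2 - w ^ 3))) in *.
  apply Rlt_le_trans with (Rabs M + 1). lra.
  apply Rmult_le_reg_r with s. auto. unfold Rdiv. rewrite Rmult_assoc, Rinv_l by lra.
  apply Rmult_lt_compat_l with (r := Rabs M + 1) in Hs; [|lra].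
  replace ((Rabs M + 1) * (1 / (Rabs M + 1))) with 1 in Hs by (field; lra). lra.
Qed.

Lemma ball_R : forall (x e y : R), ball x e y <-> Rabs (y - x) < e.
Proof. intros. unfold ball; simpl; unfold AbsRing_ball, abs, minus, plus, opp; simpl. tauto. Qed.

Lemma lim_tmin_u : forall f, (forall t, tmin < t -> f t = U t) ->
  filterlim f (at_right tmin) (locally 0).
Proof.
  intros f Hf. apply filterlim_locally. intros eps. pose proof c_pos.
  set (eta := Rmin eps (cbrt2 / 2)).
  assert (0 < eta < cbrt2) by (unfold eta, Rmin; destruct (Rle_dec eps (cbrt2/2)); destruct eps; simpl in *; lra).
  eapply filter_imp; [|apply (ev_tmin eta); auto].
  intros y [Hy1 Hy2]. apply ball_R. rewrite Hf by auto.
  assert (eta <= eps) by apply Rmin_l. rewrite Rabs_pos_eq; lra.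
Qed.

Lemma lim_tmin_v : forall f, (forall t, tmin < t -> f t = g (U t)) ->
  filterlim f (at_right tmin) (Rbar_locally p_infty).
Proof.
  intros f Hf P [M HM]. unfold filtermap. pose proof c_gt1. assert (HM0 := Rabs_pos M).
  set (eta := 1 / (2 * (Rabs M + 1)^2)).
  assert (He : 0 < eta <= 1/2).
  { unfold eta. split. apply Rdiv_lt_0_compat. lra. nra.
    apply Rmult_le_reg_r with (2 * (Rabs M + 1)^2). nra. field_simplify; nra. }
  eapply filter_imp; [|apply (ev_tmin eta); lra].
  intros y [Hy1 Hy2]. apply HM. rewrite Hf by auto. apply g_big. lra.
  assert (0 < U y ^ 3) by (apply pow_lt; lra).
  assert (1 / (Rabs M + 1)^2 = 2 * eta) by (unfold eta; field; lra). nra.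
Qed.

Lemma lim_inf_u : forall f, (forall t, tmin < t -> f t = U t) -> is_lim f p_infty cbrt2.
Proof.
  intros f Hf. unfold is_lim. apply filterlim_locally. intros eps. pose proof c_pos.
  set (w0 := cbrt2 - Rmin eps cbrt2 / 2).
  assert (Hm : 0 < Rmin eps cbrt2 <= eps /\ Rmin eps cbrt2 <= cbrt2).
  { split. split. apply Rmin_glb_lt; auto. destruct eps; auto. apply Rmin_l. apply Rmin_r. }
  eapply filter_imp; [|apply (ev_inf w0); unfold w0; lra].
  intros y [Hy1 Hy2]. apply ball_R. rewrite Hf by auto.
  rewrite Rabs_left by lra. unfold w0 in Hy2. lra.
Qed.

Lemma lim_inf_v : forall f, (forall t, tmin < t -> f t = g (U t)) -> is_lim f p_infty p_infty.
Proof.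
  intros f Hf P [M HM]. unfold filtermap. pose proof c_gt1. pose proof c_lt2. assert (HM0 := Rabs_pos M).
  set (th := 1 / (2 * (Rabs M + 1)^2)).
  assert (He : 0 < th <= 1/2).
  { unfold th. split. apply Rdiv_lt_0_compat. lra. nra.
    apply Rmult_le_reg_r with (2 * (Rabs M + 1)^2). nra. field_simplify; nra. }
  set (w0 := Rpower (2 - th) (1/3)).
  assert (Hw3 : w0 ^ 3 = 2 - th) by (apply cbrt_cube; lra).
  assert (Hw0 : 0 < w0) by (unfold w0, Rpower; apply exp_pos).
  assert (Hwc : w0 < cbrt2) by (apply lt_c; lra).
  eapply filter_imp; [|apply (ev_inf w0); lra].
  intros y [Hy1 Hy2]. apply HM. rewrite Hf by auto. apply g_big. lra.
  assert (w0 ^ 3 < U y ^ 3) by (apply cube_lt; lra).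
  assert (U y ^ 3 < 2) by (apply lt_c; lra).
  assert (1 / (Rabs M + 1)^2 = 2 * th) by (unfold th; field; lra). nra.
Qed.

Theorem corollary4p6 :
  (exists u v : R -> R, is_max_sol (Finite tmin) p_infty u v) /\
  (forall (a b : Rbar) (u v : R -> R), is_max_sol a b u v ->
     a = Finite tmin /\ b = p_infty /\
     (forall t, in_I a b t -> v t = 1 / sqrt (u t * (2 - u t ^ 3))) /\
     (forall w, 0 < w < cbrt2 -> exists t, in_I a b t /\ u t = w) /\
     filterlim u (at_right tmin) (locally 0) /\
     filterlim v (at_right tmin) (Rbar_locally p_infty) /\
     is_lim u p_infty cbrt2 /\
     is_lim v p_infty p_infty).
Proof.
  split.
  - exists U, Vs. split. apply sol_exists.
    intros a' b' u' v' Hs Ha Hb _.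
    destruct (sol_props a' b' u' v' Hs) as [_ Ha'].
    split. apply Rbar_le_antisym; auto.
    destruct b'; simpl in Hb; tauto.
  - intros a b u v [Hs Hmax].
    destruct (sol_props a b u v Hs) as [Hc Ha].
    assert (Agree : forall t, in_I a b t -> U t = u t /\ Vs t = v t).
    { intros t Ht. destruct Hs as [_ [_ [_ [_ Hs]]]]. destruct (Hs t Ht) as [[Hu _] _].
      destruct (Hc t Ht) as [Hv HH].
      assert (HUu : U t = u t) by (apply U_uniq; auto). split; auto.
      unfold Vs. rewrite HUu, Hv. auto. }
    assert (Hb : Rbar_le b p_infty) by (destruct b; simpl; auto).
    assert (Hag : forall t, in_I a b t -> U t = u t /\ Vs t = v t) by auto.
    destruct (Hmax (Finite tmin) p_infty U Vs sol_exists Ha Hb Hag) as [Ea Eb].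
    { rewrite <- Ea, <- Eb in *.
      assert (Ag : forall t, tmin < t -> u t = U t /\ v t = g (U t)).
      { intros t Ht. assert (HI : in_I (Finite tmin) p_infty t) by (split; simpl; auto).
        destruct (Agree t HI) as [A1 A2]. split; auto. }
      split; auto. split; auto. split.
      { intros t Ht. destruct (Hc t Ht) as [Hv _]. rewrite Hv. reflexivity. }
      split.
      { intros w Hw. exists (H w).
        assert (Ht : tmin < H w) by (rewrite <- H0; apply H_lt; lra).
        split. split; simpl; auto. rewrite (proj1 (Ag _ Ht)). apply U_uniq; auto. }
      split. apply lim_tmin_u. intros; apply Ag; auto.
      split. apply lim_tmin_v. intros; apply Ag; auto.
      split. apply lim_inf_u. intros; apply Ag; auto.
      apply lim_inf_v. intros; apply Ag; auto. }
Qed.
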